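(* Let $M$ be a partial multiplication matrix and let $\pi^\#\in\mathsf{Grid}^\#(M)$. Then $\pi^\#$ is $M$-indivisible if and only if its orientation digraph $D_{\pi^\#}$ is strongly connected.
   Context: A gridding matrix has entries in $\{0,1,-1\}$; an $m\times n$ one has $m$ columns, $n$ rows, $M_{ij}$ in column $i$ from the left and row $j$ from the bottom. An $M$-gridding of a permutation $\pi$ of length $L$ is a choice of vertical lines $\tfrac12=v_0\le\dots\le v_m=L+\tfrac12$ and horizontal lines $\tfrac12=h_0\le\dots\le h_n=L+\tfrac12$, not through points of $\pi$, such that in each cell $C_{ij}=\{v_{i-1}<x<v_i,\ h_{j-1}<y<h_j\}$ the points of $\pi$ are absent if $M_{ij}=0$, increasing if $M_{ij}=1$, decreasing if $M_{ij}=-1$. $\mathsf{Grid}^\#(M)$ is the set of $M$-gridded permutations. $M$ is a partial multiplication matrix: there are fixed $c_1,\dots,c_m,r_1,\dots,r_n\in\{\pm1\}$ with $M_{ij}=c_ir_j$ for each non-zero entry. Column $i$ is oriented left-to-right if $c_i=1$, right-to-left otherwise; row $j$ bottom-to-top if $r_j=1$, top-to-bottom otherwise. The orientation digraph $D_{\pi^\#}$ has the points of $\pi^\#$ as vertices, with $x\to y$ whenever $x,y$ lie in a common column of cells and $x$ precedes $y$ in that column's orientation, or in a common row of cells and $x$ precedes $y$ in that row's orientation. $M$-sum: for $M$-gridded $\sigma^\#,\tau^\#$, $\sigma^\#\boxplus\tau^\#$ is the $M$-gridded permutation whose points are those of $\sigma^\#$ and $\tau^\#$, each in the cell it occupied,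 with the relative order (in position and value) among points of $\sigma^\#$ and among points of $\tau^\#$ unchanged, and such that in every column of cells all points of $\sigma^\#$ precede all points of $\tau^\#$ in the column's orientation and in every row of cells all points of $\sigma^\#$ precede all points of $\tau^\#$ in the row's orientation. (Equivalently: place $\sigma^\#$ in the first copy and $\tau^\#$ in the second copy of $M$ inside the doubled matrix $M^{\times2}$ and delete odd-numbered grid lines.) $\pi^\#$ is $M$-divisible if $\pi^\#=\sigma^\#\boxplus\tau^\#$ with $\sigma^\#,\tau^\#$ non-empty, and $M$-indivisible otherwise. *)

(* Defs.v *)
From Stdlib Require Import Arith ZArith Relations.
Open Scope Z_scope.
Open Scope nat_scope.

(* A gridded permutation: points (x, perm x) for 0 <= x < len (0-indexed).
   A vertical line is an integer cut c in {0..len}: point x lies left of it iff x < c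
   (i.e. the line sits at c + 1/2 in 1-indexed coordinates).  vl 0 .. vl m are the
   vertical lines, hl 0 .. hl n the horizontal lines (on values). *)
Record gperm := mkG { len : nat; perm : nat -> nat; vl : nat -> nat; hl : nat -> nat }.

Definition in_col (g : gperm) (i x : nat) : Prop := vl g i <= x < vl g (S i).
Definition in_row (g : gperm) (j x : nat) : Prop := hl g j <= perm g x < hl g (S j).
Definition in_cell (g : gperm) (i j x : nat) : Prop := in_col g i x /\ in_row g j x.

(* M : column index i < m, row index j < n (row 0 at the bottom). *)
Definition gridded (m n : nat) (M : nat -> nat -> Z) (g : gperm) : Prop :=
  (forall x, x < len g -> perm g x < len g) /\
  (forall x y, x < len g -> y < len g -> perm g x = perm g y -> x = y) /\
  vl g 0 = 0 /\ vl g m = len g /\ (forall i, i < m -> vl g i <= vl g (S i)) /\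
  hl g 0 = 0 /\ hl g n = len g /\ (forall j, j < n -> hl g j <= hl g (S j)) /\
  (forall i j x, i < m -> j < n -> x < len g -> in_cell g i j x -> M i j <> 0%Z) /\
  (forall i j x y, i < m -> j < n -> x < len g -> y < len g ->
     in_cell g i j x -> in_cell g i j y -> x < y ->
     (M i j = 1%Z -> perm g x < perm g y) /\ (M i j = (-1)%Z -> perm g y < perm g x)).

Definition prec (s : Z) (a b : nat) : Prop :=
  (s = 1%Z /\ a < b) \/ (s = (-1)%Z /\ b < a).

Definition orient_edge (m n : nat) (c r : nat -> Z) (g : gperm) (x y : nat) : Prop :=
  x < len g /\ y < len g /\
  ((exists i, i < m /\ in_col g i x /\ in_col g i y /\ prec (c i) x y) \/
   (exists j, j < n /\ in_row g j x /\ in_row g j y /\ prec (r j) (perm g x) (perm g y))).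

Definition strongly_connected (m n : nat) (c r : nat -> Z) (g : gperm) : Prop :=
  forall x y, x < len g -> y < len g ->
    clos_refl_trans nat (orient_edge m n c r g) x y.

(* p = s (+)_M t : the points of p are the (images under f of the) points of s
   and the (images under e of the) points of t, each in the cell it occupied,
   relative order (positions and values) within s and within t unchanged, and in
   every column/row all points of s precede all points of t in its orientation. *)
Definition msum (m n : nat) (c r : nat -> Z) (p s t : gperm) : Prop :=
  exists f e : nat -> nat,
    len p = len s + len t /\
    (forall a, a < len s -> f a < len p) /\
    (forall b, b < len t -> e b < len p) /\
    (forall a a', a < len s -> a' < len s -> f a = f a' -> a = a') /\
    (forall b b', b < len t -> b' < len t -> e b = e b' -> b = b') /\
    (forall a b, a < len s -> b < len t -> f a <> e b) /\
    (forall a i, a < len s -> i < m -> (in_col s i a <-> in_col p i (f a))) /\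
    (forall a j, a < len s -> j < n -> (in_row s j a <-> in_row p j (f a))) /\
    (forall b i, b < len t -> i < m -> (in_col t i b <-> in_col p i (e b))) /\
    (forall b j, b < len t -> j < n -> (in_row t j b <-> in_row p j (e b))) /\
    (forall a a', a < len s -> a' < len s ->
       (a < a' <-> f a < f a') /\ (perm s a < perm s a' <-> perm p (f a) < perm p (f a'))) /\
    (forall b b', b < len t -> b' < len t ->
       (b < b' <-> e b < e b') /\ (perm t b < perm t b' <-> perm p (e b) < perm p (e b'))) /\
    (forall a b, a < len s -> b < len t ->
       (forall i, i < m -> in_col p i (f a) -> in_col p i (e b) -> prec (c i) (f a) (e b)) /\
       (forall j, j < n -> in_row p j (f a) -> in_row p j (e b) ->
          prec (r j) (perm p (f a)) (perm p (e b)))).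

Definition indivisible (m n : nat) (M : nat -> nat -> Z) (c r : nat -> Z) (p : gperm) : Prop :=
  ~ exists s t, gridded m n M s /\ gridded m n M t /\ 0 < len s /\ 0 < len t /\
                msum m n c r p s t.

(* Main.v *)
Require Import Defs.
From Stdlib Require Import Arith ZArith Relations Lia.
From Stdlib Require Import Classical ClassicalEpsilon FinFun.

Fixpoint cnt (Q : nat -> bool) (k : nat) : nat :=
  match k with 0 => 0 | S k' => cnt Q k' + (if Q k' then 1 else 0) end.

Lemma cnt_sub Q R k : (forall u, u < k -> Q u = true -> R u = true) -> cnt Q k <= cnt R k.
Proof.
  induction k; simpl; intros H; [lia|].
  assert (IH := IHk (fun u Hu => H u ltac:(lia))).
  destruct (Q k) eqn:EQ; [rewrite (H k ltac:(lia) EQ)|destruct (R k)]; lia.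
Qed.

Lemma cnt_mono_k Q k k' : k <= k' -> cnt Q k <= cnt Q k'.
Proof. induction 1; simpl; lia. Qed.

Lemma cnt_strict Q R k u0 : (forall u, u < k -> Q u = true -> R u = true) ->
  u0 < k -> R u0 = true -> Q u0 = false -> cnt Q k < cnt R k.
Proof.
  induction k; simpl; intros H Hu HR HQ; [lia|].
  destruct (Nat.eq_dec u0 k) as [->|Hne].
  - rewrite HR, HQ. pose proof (cnt_sub Q R k (fun u Hu => H u ltac:(lia))). lia.
  - assert (IH := IHk (fun u Hu => H u ltac:(lia)) ltac:(lia) HR HQ).
    destruct (Q k) eqn:EQ; [rewrite (H k ltac:(lia) EQ)|destruct (R k)]; lia.
Qed.

Lemma cnt_ext Q R k : (forall u, u < k -> Q u = R u) -> cnt Q k = cnt R k.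
Proof.
  induction k; simpl; intros H; [lia|].
  rewrite (IHk (fun u Hu => H u ltac:(lia))), (H k ltac:(lia)). reflexivity.
Qed.

Lemma cnt_none k : cnt (fun _ => false) k = 0.
Proof. induction k; simpl; lia. Qed.

Lemma cnt_compl Q k : cnt Q k + cnt (fun u => negb (Q u)) k = k.
Proof. induction k; simpl; [lia|]. destruct (Q k); simpl; lia. Qed.

Lemma cnt_exists Q k a : a < cnt Q k -> exists u, u < k /\ Q u = true /\ cnt Q u = a.
Proof.
  induction k; simpl; intros H; [lia|].
  destruct (lt_dec a (cnt Q k)) as [Hl|Hl].
  - destruct (IHk Hl) as [u [? [? ?]]]. exists u; repeat split; auto; lia.
  - destruct (Q k) eqn:EQ; [|lia]. exists k; repeat split; auto; lia.
Qed.

Lemma cnt_pos Q k u : u < k -> Q u = true -> 0 < cnt Q k.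
Proof.
  intros Hu HQ. pose proof (cnt_mono_k Q (S u) k Hu). simpl in H. rewrite HQ in H. lia.
Qed.

Lemma pos_iff Q u a k : Q u = true -> cnt Q u = a ->
  (cnt Q k <= a <-> k <= u) /\ (a < cnt Q k <-> u < k).
Proof.
  intros HQ Ha.
  assert (cnt Q (S u) = S a) by (simpl; rewrite HQ; lia).
  destruct (le_lt_dec k u) as [Hk|Hk].
  - pose proof (cnt_mono_k Q k u Hk). split; split; intros; lia.
  - pose proof (cnt_mono_k Q (S u) k Hk). split; split; intros; lia.
Qed.

Definition sel (Q : nat -> bool) (L a : nat) : nat :=
  epsilon (inhabits 0) (fun u => u < L /\ Q u = true /\ cnt Q u = a).

Lemma sel_spec Q L a : a < cnt Q L ->
  sel Q L a < L /\ Q (sel Q L a) = true /\ cnt Q (sel Q L a) = a.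
Proof. intros H. unfold sel. apply epsilon_spec. apply cnt_exists; auto. Qed.

Definition V (p : gperm) (Q : nat -> bool) (w : nat) :=
  cnt (fun u => andb (Q u) (perm p u <? w)) (len p).

Lemma V_mono p Q w w' : w <= w' -> V p Q w <= V p Q w'.
Proof.
  intros H. unfold V. apply cnt_sub. intros u _ Hu.
  apply andb_prop in Hu as [H1 H2]. rewrite H1. apply Nat.ltb_lt in H2. apply Nat.ltb_lt. simpl. lia.
Qed.

Lemma val_iff p Q u h : u < len p -> Q u = true ->
  (V p Q h <= V p Q (perm p u) <-> h <= perm p u) /\
  (V p Q (perm p u) < V p Q h <-> perm p u < h).
Proof.
  intros Hu HQ.
  assert (Hs : V p Q (perm p u) < V p Q (S (perm p u))).
  { unfold V. apply (cnt_strict _ _ _ u).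
    - intros v _ Hv. apply andb_prop in Hv as [H1 H2]. rewrite H1. apply Nat.ltb_lt in H2. apply Nat.ltb_lt. simpl. lia.
    - auto.
    - rewrite HQ. apply Nat.ltb_lt. lia.
    - rewrite HQ. apply Nat.ltb_ge. lia. }
  destruct (le_lt_dec h (perm p u)) as [Hk|Hk].
  - pose proof (V_mono p Q _ _ Hk). split; split; intros; lia.
  - pose proof (V_mono p Q _ _ Hk). split; split; intros; lia.
Qed.

Definition sub (p : gperm) (Q : nat -> bool) : gperm :=
  mkG (cnt Q (len p)) (fun a => V p Q (perm p (sel Q (len p) a)))
      (fun i => cnt Q (vl p i)) (fun j => V p Q (hl p j)).

Lemma sub_col p Q i a : a < cnt Q (len p) ->
  (in_col (sub p Q) i a <-> in_col p i (sel Q (len p) a)).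
Proof.
  intros Ha. destruct (sel_spec Q (len p) a Ha) as [H1 [H2 H3]]. unfold in_col; simpl.
  destruct (pos_iff Q _ a (vl p i) H2 H3) as [A1 _].
  destruct (pos_iff Q _ a (vl p (S i)) H2 H3) as [_ B2]. tauto.
Qed.

Lemma sub_row p Q j a : a < cnt Q (len p) ->
  (in_row (sub p Q) j a <-> in_row p j (sel Q (len p) a)).
Proof.
  intros Ha. destruct (sel_spec Q (len p) a Ha) as [H1 [H2 H3]]. unfold in_row; simpl.
  destruct (val_iff p Q _ (hl p j) H1 H2) as [A1 _].
  destruct (val_iff p Q _ (hl p (S j)) H1 H2) as [_ B2]. tauto.
Qed.

Lemma sub_ord p Q a a' : a < cnt Q (len p) -> a' < cnt Q (len p) ->
  (a < a' <-> sel Q (len p) a < sel Q (len p) a') /\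
  (perm (sub p Q) a < perm (sub p Q) a' <->
     perm p (sel Q (len p) a) < perm p (sel Q (len p) a')).
Proof.
  intros Ha Ha'. destruct (sel_spec Q (len p) a Ha) as [H1 [H2 H3]].
  destruct (sel_spec Q (len p) a' Ha') as [H1' [H2' H3']].
  split.
  - destruct (pos_iff Q _ a (sel Q (len p) a') H2 H3) as [_ B]. rewrite H3' in B. exact B.
  - simpl. exact (proj2 (val_iff p Q _ _ H1 H2)).
Qed.

Lemma sub_gridded m n M p Q : gridded m n M p -> gridded m n M (sub p Q).
Proof.
  intros (Hperm & Hinj & Hv0 & Hvm & Hvmono & Hh0 & Hhn & Hhmono & Hcell & Hord).
  unfold gridded. repeat split.
  - simpl. intros a Ha. destruct (sel_spec Q (len p) a Ha) as [H1 [H2 H3]].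
    unfold V. apply (cnt_strict _ _ _ (sel Q (len p) a)); auto.
    + intros v _ Hv. apply andb_prop in Hv as [? ?]; auto.
    + rewrite H2. apply Nat.ltb_ge. lia.
  - simpl. intros a a' Ha Ha' E.
    destruct (sub_ord p Q a a' Ha Ha') as [_ B1].
    destruct (sub_ord p Q a' a Ha' Ha) as [_ B2]. simpl in B1, B2.
    destruct (sel_spec Q (len p) a Ha) as [H1 [H2 H3]].
    destruct (sel_spec Q (len p) a' Ha') as [H1' [H2' H3']].
    destruct (lt_eq_lt_dec (perm p (sel Q (len p) a)) (perm p (sel Q (len p) a'))) as [[Hl|Hl]|Hl].
    + apply B1 in Hl. lia.
    + apply Hinj in Hl; auto. rewrite <- H3, <- H3', Hl. reflexivity.
    + apply B2 in Hl. lia.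
  - simpl. rewrite Hv0. reflexivity.
  - simpl. rewrite Hvm. reflexivity.
  - simpl. intros i Hi. apply cnt_mono_k. auto.
  - simpl. rewrite Hh0. unfold V. rewrite (cnt_ext _ (fun _ => false)).
    + apply cnt_none.
    + intros u _. destruct (Q u); simpl; auto.
  - simpl. rewrite Hhn. unfold V. apply cnt_ext. intros u Hu.
    destruct (Q u); simpl; auto. apply Nat.ltb_lt. auto.
  - simpl. intros j Hj. apply V_mono. auto.
  - simpl. intros i j a Hi Hj Ha [C R]. apply sub_col in C; auto. apply sub_row in R; auto.
    destruct (sel_spec Q (len p) a Ha) as [H1 _].
    exact (Hcell i j _ Hi Hj H1 (conj C R)).
  - intros HM. simpl in H1, H2. destruct H3 as [C R], H4 as [C' R'].
    apply sub_col in C; auto. apply sub_col in C'; auto.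
    apply sub_row in R; auto. apply sub_row in R'; auto.
    destruct (sub_ord p Q x y H1 H2) as [O1 O2]. apply O1 in H5.
    destruct (Hord i j _ _ H H0 (proj1 (sel_spec Q _ x H1)) (proj1 (sel_spec Q _ y H2)) (conj C R) (conj C' R') H5) as [A B].
    apply O2; auto.
  - intros HM. simpl in H1, H2. destruct H3 as [C R], H4 as [C' R'].
    apply sub_col in C; auto. apply sub_col in C'; auto.
    apply sub_row in R; auto. apply sub_row in R'; auto.
    destruct (sub_ord p Q x y H1 H2) as [O1 O2]. apply O1 in H5.
    destruct (sub_ord p Q y x H2 H1) as [_ O3].
    destruct (Hord i j _ _ H H0 (proj1 (sel_spec Q _ x H1)) (proj1 (sel_spec Q _ y H2)) (conj C R) (conj C' R') H5) as [A B].
    apply O3; auto.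
Qed.

Lemma prec_total s a b : (s = 1%Z \/ s = (-1)%Z) -> a <> b -> prec s a b \/ prec s b a.
Proof. unfold prec; intros; lia. Qed.

Lemma prec_anti s a b : (s = 1%Z \/ s = (-1)%Z) -> prec s a b -> prec s b a -> False.
Proof. unfold prec; intros; lia. Qed.

Theorem lemma3p2 (m n : nat) (M : nat -> nat -> Z) (c r : nat -> Z)
  (HM : forall i j, i < m -> j < n -> M i j = 0%Z \/ M i j = 1%Z \/ M i j = (-1)%Z)
  (Hc : forall i, i < m -> c i = 1%Z \/ c i = (-1)%Z)
  (Hr : forall j, j < n -> r j = 1%Z \/ r j = (-1)%Z)
  (Hmult : forall i j, i < m -> j < n -> M i j <> 0%Z -> M i j = (c i * r j)%Z)
  (p : gperm) (Hp : gridded m n M p) :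
  indivisible m n M c r p <-> strongly_connected m n c r p.
Proof.
  split.
  - intros Hind x y Hx Hy. apply NNPP. intros Hnot. apply Hind.
    pose (P := fun u => if excluded_middle_informative
                 (clos_refl_trans nat (orient_edge m n c r p) u y) then true else false).
    assert (HP : forall u, P u = true <-> clos_refl_trans nat (orient_edge m n c r p) u y).
    { intros u. unfold P. destruct excluded_middle_informative; split; intros; auto; congruence. }
    pose (Pn := fun u => negb (P u)).
    assert (HPx : P x = false).
    { destruct (P x) eqn:E; auto. apply HP in E. contradiction. }
    assert (HPy : P y = true) by (apply HP; apply rt_refl).
    pose proof (Hp) as (Hperm & Hinj & _).
    exists (sub p P), (sub p Pn).
    split; [apply sub_gridded; auto|].
    split; [apply sub_gridded; auto|].
    split; [simpl; apply (cnt_pos _ _ y); auto|].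
    split; [simpl; apply (cnt_pos _ _ x); auto; unfold Pn; rewrite HPx; reflexivity|].
    exists (sel P (len p)), (sel Pn (len p)).
    split; [simpl; symmetry; exact (cnt_compl P (len p))|].
    split; [intros a Ha; exact (proj1 (sel_spec _ _ _ Ha))|].
    split; [intros b Hb; exact (proj1 (sel_spec _ _ _ Hb))|].
    split.
    { intros a a' Ha Ha' E. destruct (sel_spec _ _ _ Ha) as [_ [_ H3]].
      destruct (sel_spec _ _ _ Ha') as [_ [_ H3']]. rewrite <- H3, <- H3', E. reflexivity. }
    split.
    { intros a a' Ha Ha' E. destruct (sel_spec _ _ _ Ha) as [_ [_ H3]].
      destruct (sel_spec _ _ _ Ha') as [_ [_ H3']]. rewrite <- H3, <- H3', E. reflexivity. }
    split.
    { intros a b Ha Hb E. destruct (sel_spec P (len p) _ Ha) as [_ [H2 _]].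
      destruct (sel_spec Pn (len p) _ Hb) as [_ [H2' _]]. rewrite <- E in H2'. unfold Pn in H2'. rewrite H2 in H2'. discriminate. }
    split; [intros a i Ha _; apply sub_col; auto|].
    split; [intros a i Ha _; apply sub_row; auto|].
    split; [intros a i Ha _; apply sub_col; auto|].
    split; [intros a i Ha _; apply sub_row; auto|].
    split; [intros a a' Ha Ha'; apply sub_ord; auto|].
    split; [intros a a' Ha Ha'; apply sub_ord; auto|].
    intros a b Ha Hb. simpl in Ha, Hb.
    destruct (sel_spec P (len p) _ Ha) as [U1 [U2 _]].
    destruct (sel_spec Pn (len p) _ Hb) as [V1 [V2 _]].
    set (u := sel P (len p) a) in *. set (v := sel Pn (len p) b) in *.
    assert (HPv : P v = false) by (unfold Pn in V2; destruct (P v); auto).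
    assert (Huv : u <> v) by (intros E; rewrite E in U2; congruence).
    assert (Hback : orient_edge m n c r p v u -> False).
    { intros Hedge. assert (P v = true); [|congruence].
      apply HP. apply rt_trans with u; [apply rt_step; auto|apply HP; auto]. }
    split.
    + intros i Hi Cu Cv. destruct (prec_total (c i) u v (Hc i Hi) Huv) as [?|Hvu]; auto.
      exfalso. apply Hback. split; auto. split; auto. left. exists i. auto.
    + intros j Hj Ru Rv.
      assert (perm p u <> perm p v) by (intros E; apply Huv; apply Hinj; auto).
      destruct (prec_total (r j) (perm p u) (perm p v) (Hr j Hj) H) as [?|Hvu]; auto.
      exfalso. apply Hback. split; auto. split; auto. right. exists j. auto.
  - intros HSC [s [t [Gs [Gt [Hs [Ht [f [e (HL & Hf & He & Hfi & Hei & Hfe & Hcs & Hrs & Hct & Hrt & Hos & Hot & Hcross)]]]]]]]].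
    pose (g := fun k => if k <? len s then f k else e (k - len s)).
    assert (Hsurj : forall w, w < len p ->
      (exists a, a < len s /\ w = f a) \/ (exists b, b < len t /\ w = e b)).
    { intros w Hw.
      assert (bFun (len p) g).
      { intros k Hk. unfold g. destruct (Nat.ltb_spec k (len s)).
        - apply Hf; auto.
        - apply He; lia. }
      assert (bInjective (len p) g).
      { intros k k' Hk Hk'. unfold g.
        destruct (Nat.ltb_spec k (len s)); destruct (Nat.ltb_spec k' (len s)); intros E.
        - apply Hfi; auto.
        - exfalso. apply (Hfe k (k' - len s)); auto; lia.
        - exfalso. apply (Hfe k' (k - len s)); auto; lia.
        - apply Hei in E; lia. }
      destruct (proj1 (bInjective_bSurjective H) H0 w Hw) as [k [Hk E]].
      unfold g in E. destruct (Nat.ltb_spec k (len s)).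
      - left. exists k. auto.
      - right. exists (k - len s). split; [lia|auto]. }
    assert (Key : forall u v, clos_refl_trans_1n nat (orient_edge m n c r p) u v ->
       (exists b, b < len t /\ u = e b) -> (exists a, a < len s /\ v = f a) -> False).
    { induction 1 as [u|u w v Hedge Hrest IH]; intros [b [Hb Eb]] Hv.
      - destruct Hv as [a [Ha Ea]]. subst. apply (Hfe a b); auto.
      - destruct Hedge as (Hu & Hw & Hed).
        destruct (Hsurj w Hw) as [[a' [Ha' Ea']]|Hwe]; [|apply IH; auto].
        subst. destruct (Hcross a' b Ha' Hb) as [Cc Rc].
        destruct Hed as [[i (Hi & C1 & C2 & Pr)]|[j (Hj & R1 & R2 & Pr)]].
        + apply (prec_anti (c i) (f a') (e b)); auto.
        + apply (prec_anti (r j) (perm p (f a')) (perm p (e b))); auto. }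
    apply (Key (e 0) (f 0)).
    + apply clos_rt_rt1n. apply HSC; [apply He|apply Hf]; auto.
    + exists 0; auto.
    + exists 0; auto.
Qed.
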